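(* Let $p$ be an odd prime. If $p\equiv 3\pmod 4$, then $g\big(\tfrac{p^2-1}{4},p^2\big)=p-1$. If $p\equiv 1\pmod 4$, then the Waring number $g\big(\tfrac{p^2-1}{4},p^2\big)$ does not exist.
   Context: For a prime power $q$ and a positive integer $k$, the Waring number $g(k,q)$ is the smallest $s$ (if it exists) such that every element of $\mathbb{F}_q$ is a sum of $s$ $k$-th powers of elements of $\mathbb{F}_q$. *)

(* Defs.v *)
From HB Require Import structures.
From mathcomp Require Import all_boot all_order all_algebra all_field.
Set Implicit Arguments. Unset Strict Implicit. Unset Printing Implicit Defensive.
Import GRing.Theory.
Local Open Scope ring_scope.

Definition sum_of_kth_powers (F : finFieldType) (k s : nat) (x : F) : Prop :=
  exists f : 'I_s -> F, x = \sum_(i < s) (f i) ^+ k.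

Definition waring_all (F : finFieldType) (k s : nat) : Prop :=
  forall x : F, sum_of_kth_powers k s x.

Definition is_waring_number (F : finFieldType) (k s : nat) : Prop :=
  waring_all F k s /\ (forall t : nat, waring_all F k t -> (s <= t)%N).

Definition waring_exists (F : finFieldType) (k : nat) : Prop :=
  exists s : nat, waring_all F k s.

(* Main.v *)
Require Import Defs.
From HB Require Import structures.
From mathcomp Require Import all_boot all_order all_algebra all_field.
From mathcomp Require Import all_fingroup all_solvable zify ring.
Set Implicit Arguments. Unset Strict Implicit. Unset Printing Implicit Defensive.
Import GRing.Theory.
Local Open Scope ring_scope.

Lemma sk_add (F : finFieldType) (k s t : nat) (x y : F) :
  sum_of_kth_powers k s x -> sum_of_kth_powers k t y ->
  sum_of_kth_powers k (s + t) (x + y).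
Proof.
move=> [f ->] [g ->].
exists (fun i : 'I_(s + t) => match split i with inl j => f j | inr j => g j end).
rewrite big_split_ord /=; congr (_ + _); apply: eq_bigr => i _.
  by rewrite (unsplitK (inl i)).
by rewrite (unsplitK (inr i)).
Qed.

Lemma sk_zero (F : finFieldType) (k s : nat) : (0 < k)%N ->
  sum_of_kth_powers k s (0 : F).
Proof.
move=> k0; exists (fun _ => 0); rewrite big1 // => i _.
by rewrite expr0n; case: k k0.
Qed.

Lemma sk_nat (F : finFieldType) (k n : nat) (u y : F) : y = u ^+ k ->
  sum_of_kth_powers k n (n%:R * y).
Proof.
move=> ->; elim: n => [|n IH].
  by exists (fun _ => 0); rewrite big_ord0 mul0r.
have h1 : sum_of_kth_powers k 1 (u ^+ k).
  by exists (fun _ => u); rewrite big_ord1.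
have := sk_add IH h1; rewrite addn1.
by rewrite mulrS mulrDl mul1r addrC.
Qed.

Lemma sk_mono (F : finFieldType) (k s t : nat) (x : F) : (0 < k)%N ->
  sum_of_kth_powers k s x -> (s <= t)%N -> sum_of_kth_powers k t x.
Proof.
move=> k0 hs st; have := sk_add hs (@sk_zero F k (t - s) k0).
by rewrite addr0 subnKC.
Qed.

Lemma natr_eq_mod (F : finFieldType) (p m n : nat) : p \in [pchar F] ->
  (m%:R = n%:R :> F) -> (m = n %[mod p])%N.
Proof.
move=> ch; wlog mn : m n / (m <= n)%N.
  move=> W; case: (leqP m n) => [|/ltnW] h e; first exact: W.
  by symmetry; apply: W.
move=> e; rewrite -(subnKC mn) natrD in e.
have : (n - m)%:R == 0 :> F by apply/eqP; apply: (addrI (m%:R : F)); rewrite addr0 -e.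
rewrite -(dvdn_pcharf ch) => d; apply/eqP.
by rewrite eq_sym eqn_mod_dvd.
Qed.
Lemma unit_pow (F : finFieldType) (x : F) : x != 0 -> x ^+ #|F|.-1 = 1.
Proof.
move=> x0; apply: (mulfI x0); rewrite mulr1 -exprS prednK ?expf_card //.
by apply/card_gt0P; exists x.
Qed.

Lemma prim_exists (F : finFieldType) : (1 < #|F|)%N ->
  exists z : F, (#|F|.-1).-primitive_root z.
Proof.
move=> F1.
have : has (#|F|.-1).-primitive_root (enum (predC1 (0:F))).
  apply: has_prim_root.
- by rewrite -ltnS prednK // ltnW.
- apply/allP=> x; rewrite mem_enum /= => x0; rewrite unity_rootE unit_pow //.
- exact: enum_uniq.
- by rewrite -cardE cardC1.
by case/hasP=> z _ pz; exists z.
Qed.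

Lemma modbound (p c a b : nat) : p = (2 * c + 1)%N -> (a = b + c %[mod p])%N ->
  (c <= a + b)%N.
Proof.
move=> hp e; case: (leqP (b + c) a) => h; first lia.
have : (p %| (b + c) - a)%N by rewrite -eqn_mod_dvd ?(ltnW h) // e.
move/dvdn_leq; have : (0 < b + c - a)%N by lia.
move=> H /(_ H); lia.
Qed.

Lemma neqsym (T : eqType) (a b : T) : a != b -> (b == a) = false.
Proof. by rewrite eq_sym => /negbTE. Qed.

Lemma part (F : finFieldType) (p c a k : nat) (u : F) : p \in [pchar F] ->
  p = (2 * c + 1)%N -> (a < p)%N -> (0 < k)%N -> (exists s, u = s ^+ k) ->
  (exists t, - u = t ^+ k) -> sum_of_kth_powers k c (a%:R * u).
Proof.
move=> ch hp ap k0 [s hs] [t ht].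
case: (leqP a c) => ac.
  by apply: (sk_mono k0 _ ac); apply: sk_nat hs.
have ha : a%:R = - (p - a)%:R :> F.
  by apply/eqP; rewrite -addr_eq0 -natrD subnKC ?(pcharf0 ch) // ltnW.
rewrite ha mulNr -mulrN; apply: (sk_mono k0 _ (_ : (p - a <= c)%N)); last by lia.
exact: sk_nat ht.
Qed.

Lemma case3 (p : nat) (F : finFieldType) :
  prime p -> #|F| = (p ^ 2)%N -> (p %% 4 = 3)%N ->
  is_waring_number F ((p ^ 2 - 1) %/ 4) (p - 1).
Proof.
move=> pr HF p4.
set q := (p %/ 4)%N.
have Hp : p = (4 * q + 3)%N by rewrite {1}(divn_eq p 4) p4 /q; lia.
set k := ((p ^ 2 - 1) %/ 4)%N.
have Hk : k = (4 * q * q + 6 * q + 2)%N.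
  rewrite /k -mulnn.
  have -> : (p * p - 1 = 4 * (4 * q * q + 6 * q + 2))%N by rewrite Hp; nia.
  by rewrite mulKn.
have HN : #|F|.-1 = (4 * k)%N by rewrite HF Hk -mulnn Hp; nia.
have ch : p \in [pchar F] := card_finPcharP HF pr.
have p0 : (0 < p)%N by lia.
have [z pz] : exists z : F, (#|F|.-1).-primitive_root z.
  by apply: prim_exists; rewrite HF -mulnn Hp; nia.
set w := z ^+ k.
have w4 : w ^+ 4 = 1 by rewrite -exprM mulnC -HN prim_expr_order.
have w2n : w ^+ 2 != 1.
  rewrite -exprM -(prim_order_dvd pz) HN; apply/negP => /dvdn_leq; lia.
have w2 : w ^+ 2 = -1.
  have : (w ^+ 2 - 1) * (w ^+ 2 + 1) = 0.
    have -> : (w ^+ 2 - 1) * (w ^+ 2 + 1) = w ^+ 4 - 1 by ring.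
    by rewrite w4 subrr.
  move/eqP; rewrite mulf_eq0 subr_eq0 (negbTE w2n) /= addr_eq0 => /eqP //.
have w3 : w ^+ 3 = - w by rewrite exprS w2 mulrN1.
have wp : w ^+ p = - w.
  by rewrite Hp exprD exprM w4 expr1n mul1r w3.
have two0 : (2%:R : F) != 0.
  rewrite -(dvdn_pcharf ch); apply/negP => /dvdn_leq; lia.
have w0 : w != 0.
  apply/eqP=> e; move: w2; rewrite e expr0n /= => /eqP.
  by rewrite eq_sym oppr_eq0 oner_eq0.
have key (u v : F) : u ^+ p = u -> v ^+ p = v -> u + v * w = 0 -> u = 0 /\ v = 0.
  move=> hu hv H.
  have e2 : (u + v * w) ^+ p = 0 by rewrite H expr0n gtn_eqF.
  move: e2; rewrite -(pFrobenius_autE ch) rmorphD rmorphM /= !pFrobenius_autE hu hv wp => e2.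
  have hu0 : u = 0.
    have : 2%:R * u = 0.
      have -> : 2%:R * u = (u + v * w) + (u + v * - w) by ring.
      by rewrite H e2 addr0.
    by move/eqP; rewrite mulf_eq0 (negbTE two0) /= => /eqP.
  split=> //; move: H; rewrite hu0 add0r => /eqP; rewrite mulf_eq0 (negbTE w0) orbF.
  by move/eqP.
have fixn (n : nat) : (n%:R : F) ^+ p = n%:R.
  exact: (pFrobenius_aut_nat ch n).
have fixB (a b : nat) : ((a%:R - b%:R : F)) ^+ p = a%:R - b%:R.
  by rewrite -(pFrobenius_autE ch) rmorphB /= !pFrobenius_autE !fixn.
have kp0 : (0 < k)%N by rewrite Hk; lia.
set c := (2 * q + 1)%N.
have Hc : p = (2 * c + 1)%N by rewrite /c; lia.
have pw1 : exists s, (1 : F) = s ^+ k by exists 1; rewrite expr1n.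
have pwm1 : exists s, (- 1 : F) = s ^+ k by exists (z ^+ 2); rewrite exprAC -/w w2.
have pww : exists s, w = s ^+ k by exists z.
have pwmw : exists s, - w = s ^+ k by exists (z ^+ 3); rewrite exprAC -/w w3.
split.
  move=> x.
  pose f := fun ab : 'I_p * 'I_p => ((ab.1 : nat)%:R + (ab.2 : nat)%:R * w : F).
  have finj : injective f.
    move=> [a b] [a' b'] /= e.
    have := key _ _ (fixB a a') (fixB b b').
    have -> : (a%:R - a'%:R) + (b%:R - b'%:R) * w = f (a, b) - f (a', b') :> F.
      by rewrite /f /=; ring.
    rewrite e subrr => /(_ erefl) [/eqP ea /eqP eb].
    rewrite subr_eq0 in ea; rewrite subr_eq0 in eb.
    have := natr_eq_mod ch (eqP ea); rewrite !modn_small // => /val_inj ->.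
    by have := natr_eq_mod ch (eqP eb); rewrite !modn_small // => /val_inj ->.
  have : x \in codom f.
    by apply: (inj_card_onto finj); rewrite card_prod !card_ord HF -mulnn.
  case/codomP=> [[a b]] ->; rewrite /f /=.
  have -> : (p - 1)%N = (c + c)%N by lia.
  apply: sk_add; last by apply: part ch Hc _ kp0 pww pwmw.
  have := part ch Hc (ltn_ord a) kp0 pw1 (_ : exists t, - 1 = t ^+ k).
  by rewrite mulr1; apply.
move=> t /(_ (c%:R + c%:R * w)) [f e].
have cls (y0 : F) : (exists x, y0 = x ^+ k) ->
    y0 = 0 \/ y0 = 1 \/ y0 = -1 \/ y0 = w \/ y0 = - w.
  move=> [x ->]; have [->|x0] := eqVneq x 0.
    by left; rewrite expr0n gtn_eqF.
  right; have y4 : (x ^+ k) ^+ 4 = 1 by rewrite -exprM mulnC -HN unit_pow.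
  move: (x ^+ k) y4 => y y4.
  have : (y - 1) * (y + 1) * ((y - w) * (y + w)) = 0.
    have -> : (y - 1) * (y + 1) * ((y - w) * (y + w)) = (y ^+ 2 - 1) * (y ^+ 2 - w ^+ 2).
      by ring.
    rewrite w2; have -> : (y ^+ 2 - 1) * (y ^+ 2 - - 1) = y ^+ 4 - 1 by ring.
    by rewrite y4 subrr.
  move/eqP; rewrite !mulf_eq0 !subr_eq0 !addr_eq0.
  by case/orP=> [/orP[]|/orP[]] /eqP; tauto.
have n01 : (0 : F) != 1 by rewrite eq_sym oner_eq0.
have n0m1 : (0 : F) != -1 by rewrite eq_sym oppr_eq0 oner_eq0.
have n0w : (0 : F) != w by rewrite eq_sym.
have n0mw : (0 : F) != - w by rewrite eq_sym oppr_eq0.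
have n1m1 : (1 : F) != -1.
  by rewrite -addr_eq0; have -> : (1 + 1 : F) = 2%:R by [].
have n1w : (1 : F) != w by apply: contra w2n => /eqP <-; rewrite expr1n.
have n1mw : (1 : F) != - w.
  by apply: contra w2n; rewrite eq_sym eqr_oppLR => /eqP ->; rewrite sqrrN expr1n.
have nm1w : (- 1 : F) != w by apply: contra w2n => /eqP <-; rewrite sqrrN expr1n.
have nm1mw : (- 1 : F) != - w by rewrite eqr_opp.
have nwmw : w != - w.
  rewrite -addr_eq0; have -> : w + w = 2%:R * w by rewrite mulr_natl mulr2n.
  by rewrite mulf_eq0 negb_or two0.
have dec (y : F) : y = 0 \/ y = 1 \/ y = -1 \/ y = w \/ y = - w ->
    y = ((nat_of_bool (y == 1))%:R - (nat_of_bool (y == -1))%:R)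
        + ((nat_of_bool (y == w))%:R - (nat_of_bool (y == - w))%:R) * w /\
    leq (addn (addn (addn (nat_of_bool (y == 1)) (nat_of_bool (y == -1)))
      (nat_of_bool (y == w))) (nat_of_bool (y == - w))) 1%N.
  have R := (negbTE n01, negbTE n0m1, negbTE n0w, negbTE n0mw, negbTE n1m1,
             negbTE n1w, negbTE n1mw, negbTE nm1w, negbTE nm1mw, negbTE nwmw).
  have S := (neqsym n01, neqsym n0m1, neqsym n0w, neqsym n0mw, neqsym n1m1,
             neqsym n1w, neqsym n1mw, neqsym nm1w, neqsym nm1mw, neqsym nwmw).
  by case=> [->|[->|[->|[->|->]]]]; rewrite ?eqxx ?R ?S /=; split => //; ring.
have hy i : f i ^+ k = 0 \/ f i ^+ k = 1 \/ f i ^+ k = -1 \/ f i ^+ k = w \/ f i ^+ k = - w.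
  by apply: cls; exists (f i).
rewrite (eq_bigr _ (fun i _ => (dec _ (hy i)).1)) in e.
rewrite big_split /= -mulr_suml !sumrB -!natr_sum in e.
set n1 := (\sum_(i < t) nat_of_bool (f i ^+ k == GRing.one F))%N in e.
set n2 := (\sum_(i < t) nat_of_bool (f i ^+ k == GRing.opp (GRing.one F)))%N in e.
set n3 := (\sum_(i < t) nat_of_bool (f i ^+ k == w))%N in e.
set n4 := (\sum_(i < t) nat_of_bool (f i ^+ k == GRing.opp w))%N in e.
have := key _ _ (fixB n1 (n2 + c)) (fixB n3 (n4 + c)).
have -> : (n1%:R - (n2 + c)%:R) + (n3%:R - (n4 + c)%:R) * w =
    (n1%:R - n2%:R + (n3%:R - n4%:R) * w) - (c%:R + c%:R * w) :> F.
  by rewrite !natrD; ring.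
rewrite -e subrr => /(_ erefl) [/eqP h1 /eqP h2].
rewrite subr_eq0 in h1; rewrite subr_eq0 in h2.
have b1 := modbound Hc (natr_eq_mod ch (eqP h1)).
have b2 := modbound Hc (natr_eq_mod ch (eqP h2)).
have : (n1 + n2 + n3 + n4 <= t)%N.
  rewrite /n1 /n2 /n3 /n4 -!big_split /=.
  rewrite -[X in (_ <= X)%N]card_ord -sum1_card; apply: leq_sum => i _.
  exact: (dec _ (hy i)).2.
move=> ht; clear -b1 b2 ht Hc; lia.
Qed.

Lemma case1 (p : nat) (F : finFieldType) :
  prime p -> #|F| = (p ^ 2)%N -> (p %% 4 = 1)%N ->
  ~ waring_exists F ((p ^ 2 - 1) %/ 4).
Proof.
move=> pr HF p4 [s H].
set q := (p %/ 4)%N.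
have Hp : p = (4 * q + 1)%N by rewrite {1}(divn_eq p 4) p4 /q; lia.
have p2 : (2 <= p)%N := prime_gt1 pr.
set k := ((p ^ 2 - 1) %/ 4)%N.
have Hk : k = (4 * q * q + 2 * q)%N.
  rewrite /k -mulnn.
  have -> : (p * p - 1 = 4 * (4 * q * q + 2 * q))%N by rewrite Hp; nia.
  by rewrite mulKn.
have HN : #|F|.-1 = (4 * k)%N by rewrite HF Hk -mulnn Hp; nia.
have ch : p \in [pchar F] := card_finPcharP HF pr.
have p0 : (0 < p)%N by lia.
have kp0 : (0 < k)%N by rewrite Hk; nia.
have [z pz] : exists z : F, (#|F|.-1).-primitive_root z.
  by apply: prim_exists; rewrite HF -mulnn; nia.
have fixy (y : F) : (exists x, y = x ^+ k) -> y ^+ p = y.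
  move=> [x ->]; have [->|x0] := eqVneq x 0.
    by rewrite expr0n gtn_eqF // expr0n gtn_eqF.
  have y4 : (x ^+ k) ^+ 4 = 1 by rewrite -exprM mulnC -HN unit_pow.
  by rewrite Hp exprD exprM y4 expr1n mul1r expr1.
have [f e] := H z.
have zp : z ^+ p = z.
  rewrite e -(pFrobenius_autE ch) rmorph_sum /=; apply: eq_bigr => i _.
  by rewrite pFrobenius_autE; apply: fixy; exists (f i).
have z0 : z != 0.
  have N0 : (0 < #|F|.-1)%N by rewrite HF -mulnn; nia.
  apply/eqP => z0; move: (prim_expr_order pz); rewrite z0 expr0n gtn_eqF //=.
  by move/eqP; rewrite eq_sym oner_eq0.
have : z ^+ (p - 1) = 1.
  apply: (mulfI z0); rewrite mulr1 -exprS subn1 prednK //.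
move/eqP; rewrite -(prim_order_dvd pz) => /dvdn_leq.
rewrite HF -mulnn; nia.
Qed.

Theorem mainTheorem10 (p : nat) (F : finFieldType) :
  prime p -> odd p -> #|F| = (p ^ 2)%N ->
  ((p %% 4 = 3)%N -> is_waring_number F ((p ^ 2 - 1) %/ 4) (p - 1)) /\
  ((p %% 4 = 1)%N -> ~ waring_exists F ((p ^ 2 - 1) %/ 4)).
Proof.
move=> pr _ HF; split; [exact: case3 | exact: case1].
Qed.
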